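(* Let $(X_t)_{t\ge0}$ be a real process and $r\in\mathbb R$, and for $0<\varepsilon\le1$ set $X_1^\varepsilon:=X_{\varepsilon^2}$. Assume $S_t:=e^{-rt}\exp(X_t)$ is a martingale and that there exist $p>1$ and $t>0$ with $E[S_t^p]<\infty$. Then $\limsup_{\varepsilon\to0}E[\exp(pX_1^\varepsilon)]<\infty$. *)

(* Defs.v *)
From HB Require Import structures.
From mathcomp Require Import all_boot all_order all_algebra.
From mathcomp Require Import all_classical all_reals all_analysis.
Set Implicit Arguments. Unset Strict Implicit. Unset Printing Implicit Defensive.
Import Order.TTheory GRing.Theory Num.Theory.
Import numFieldNormedType.Exports.
Local Open Scope classical_set_scope.
Local Open Scope ring_scope.

Definition filtration (R : realType) (d : measure_display) (T : measurableType d)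
  (F : R -> set (set T)) : Prop :=
  (forall t, 0 <= t -> sigma_algebra setT (F t) /\ F t `<=` measurable) /\
  (forall s t, 0 <= s -> s <= t -> F s `<=` F t).

(* Martingale w.r.t. the filtration F under P (conditional expectations are not
   in the library; we use the standard defining property
   E[M_t 1_A] = E[M_s 1_A] for all A in F_s, s <= t). *)
Definition martingale (R : realType) (d : measure_display) (T : measurableType d)
  (P : probability T R) (F : R -> set (set T)) (M : R -> T -> R) : Prop :=
  [/\ (forall t, 0 <= t -> forall B : set R, measurable B -> F t (M t @^-1` B)),
      (forall t, 0 <= t -> P.-integrable setT (EFin \o M t)) &
      (forall s t, 0 <= s -> s <= t -> forall A, F s A ->
         (\int[P]_(x in A) (M t x)%:E = \int[P]_(x in A) (M s x)%:E)%E)].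

(* Main.v *)
Require Import Defs.
From HB Require Import structures.
From mathcomp Require Import all_boot all_order all_algebra.
From mathcomp Require Import all_classical all_reals all_analysis.
From mathcomp Require Import lra ring.
Import Order.TTheory GRing.Theory Num.Theory.
Import numFieldNormedType.Exports.
Local Open Scope classical_set_scope.
Local Open Scope ring_scope.
Set Implicit Arguments. Unset Strict Implicit.
Import measurable_realfun.


Definition nM (R : realType) (T : Type) (Y : T -> R) (M : nat) (x : T) : R :=
  \sum_(k < M) \1_[set y | k.+1%:R <= Y y] x.
Arguments nM {R T}.

Lemma nM0 (R : realType) (T : Type) (Y : T -> R) x : nM Y 0 x = 0.
Proof. by rewrite /nM big_ord0. Qed.

Lemma nMS (R : realType) (T : Type) (Y : T -> R) M x :
  nM Y M.+1 x = nM Y M x + \1_[set y | M.+1%:R <= Y y] x.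
Proof. by rewrite /nM big_ord_recr. Qed.

Lemma nM_full (R : realType) (T : Type) (Y : T -> R) M x :
  M%:R <= Y x -> nM Y M x = M%:R.
Proof.
move=> hM; rewrite /nM (eq_bigr (fun=> 1)) ?sumr_const ?card_ord//.
move=> k _; rewrite indicE mem_set//=; apply: le_trans hM.
by rewrite ler_nat.
Qed.

Lemma nM_ge0 (R : realType) (T : Type) (Y : T -> R) M x : 0 <= nM Y M x.
Proof. by rewrite /nM; apply: sumr_ge0 => k _; rewrite indicE. Qed.

Lemma nM_le (R : realType) (T : Type) (Y : T -> R) M x :
  0 <= Y x -> nM Y M x <= Y x.
Proof.
move=> Y0; elim: M => [|M IH]; first by rewrite nM0.
have [hM|hM] := boolP (M.+1%:R <= Y x); first by rewrite nM_full.
by rewrite nMS indicE memNset ?addr0 //=; exact/negP.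
Qed.

Lemma nM_upper (R : realType) (T : Type) (Y : T -> R) M x :
  Y x <= M.+1%:R -> Y x <= nM Y M x + 1.
Proof.
elim: M => [|M IH] hY; first by rewrite nM0 add0r.
have [hM|hM] := boolP (M.+1%:R <= Y x).
  by rewrite nM_full// natr1.
rewrite nMS indicE memNset ?addr0 /=; last exact/negP.
apply: IH.
by rewrite ltW// ltNge.
Qed.

Lemma nM_min (R : realType) (T : Type) (Y : T -> R) M x :
  Num.min (Y x) M%:R <= nM Y M x + 1.
Proof.
rewrite /Num.min; case: ifPn => hM.
  apply: nM_upper; apply: (le_trans (ltW hM)).
  by rewrite ler_nat.
rewrite -leNgt in hM; by rewrite nM_full// lerDl.
Qed.

Lemma powR_le (R : realType) (a b r : R) : 0 <= r -> 0 <= a -> a <= b ->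
  a `^ r <= b `^ r.
Proof.
move=> r0 a0 ab; apply: (ge0_ler_powR r0); rewrite ?nnegrE//.
exact: le_trans ab.
Qed.

Lemma powR_split (R : realType) (n p : R) : 0 <= n -> 1 < p ->
  n `^ p = n * n `^ (p - 1).
Proof.
move=> n0 p1; rewrite -{2}(powRr1 n0) -powRD; first by rewrite addrC subrK.
by apply/implyP; rewrite addrC subrK => /eqP h; exfalso; lra.
Qed.

Lemma hS (R : realType) (T : Type) (Y : T -> R) (p : R) M x :
  (nM Y M.+1 x) `^ (p - 1) = (nM Y M x) `^ (p - 1) +
    (M.+1%:R `^ (p - 1) - M%:R `^ (p - 1)) * \1_[set y | M.+1%:R <= Y y] x.
Proof.
have [hM|hM] := boolP (M.+1%:R <= Y x).
  rewrite indicE mem_set// mulr1 (nM_full hM) nM_full; first lra.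
  by apply: le_trans hM; rewrite ler_nat.
rewrite nMS indicE memNset ?addr0 ?mulr0 /=; last exact/negP.
by rewrite addr0.
Qed.

Lemma young2 (R : realType) (n z p : R) : 0 <= n -> 0 <= z -> 1 < p ->
  z * n `^ (p - 1) <= n `^ p / 2 + 2 `^ (p - 1) * z `^ p.
Proof.
move=> n0 z0 p1.
have h1 : 0 <= n `^ p / 2 by rewrite divr_ge0// powR_ge0.
have h2 : 0 <= 2 `^ (p - 1) * z `^ p by rewrite mulr_ge0// powR_ge0.
have [hz|hz] := leP (2 * z) n.
  apply: (@le_trans _ _ (n `^ p / 2)); last by rewrite lerDl.
  rewrite (powR_split n0 p1).
  rewrite mulrAC ler_wpM2r ?powR_ge0//; lra.
apply: (@le_trans _ _ (2 `^ (p - 1) * z `^ p)); last by rewrite lerDr.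
rewrite (powR_split z0 p1) mulrCA ler_wpM2l//.
rewrite -powRM//.
apply: powR_le; lra.
Qed.

Lemma ny_bound (R : realType) (n y p : R) : 0 <= n -> n <= y -> 1 < p ->
  n `^ p <= y * n `^ (p - 1).
Proof.
move=> n0 ny p1; rewrite (powR_split n0 p1) ler_wpM2r ?powR_ge0//.
Qed.

Lemma m_bound (R : realType) (m n p : R) : 0 <= m -> 0 <= n -> m <= n + 1 -> 1 < p ->
  m `^ p <= 2 `^ p * (n `^ p + 1).
Proof.
move=> m0 n0 mn p1.
have [hn|hn] := leP 1 n.
  apply: (@le_trans _ _ ((2 * n) `^ p)).
    apply: powR_le; lra.
  rewrite powRM//.
  by rewrite ler_wpM2l ?powR_ge0// lerDl.
apply: (@le_trans _ _ (2 `^ p)).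
  apply: powR_le; lra.
by rewrite ler_peMr ?powR_ge0// lerDr powR_ge0.
Qed.

Lemma intA (R : realType) (d : measure_display) (T : measurableType d)
  (P : probability T R) (f : T -> R) (A : set T) :
  (\int[P]_x (f x * \1_A x)%:E = \int[P]_(x in A) (f x)%:E)%E.
Proof.
rewrite [RHS]integral_mkcond; apply: eq_integral => x _.
by rewrite /patch indicE; case: (x \in A); rewrite /= ?mulr1 ?mulr0.
Qed.

Lemma mA (R : realType) (d : measure_display) (T : measurableType d) (Y : T -> R) c :
  measurable_fun setT Y -> measurable [set x | c <= Y x].
Proof.
move=> mY; have := mY measurableT _ (measurable_itv `[c, +oo[); rewrite setTI.
congr measurable; apply/seteqP; split => x /=; rewrite in_itv /= andbT//.
Qed.

Lemma mnM (R : realType) (d : measure_display) (T : measurableType d) (Y : T -> R) M :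
  measurable_fun setT Y -> measurable_fun setT (nM Y M).
Proof.
move=> mY; rewrite /nM; apply: measurable_sum => k.
exact/measurable_realfun.measurable_indic/mA.
Qed.

Lemma core (R : realType) (d : measure_display) (T : measurableType d)
  (P : probability T R) (Y Z : T -> R) (p z : R) :
  1 < p -> measurable_fun setT Y -> measurable_fun setT Z ->
  (forall x, 0 <= Y x) -> (forall x, 0 <= Z x) ->
  (forall c : R, \int[P]_(x in [set x | (c <= Y x)%R]) (Z x)%:E =
                 \int[P]_(x in [set x | (c <= Y x)%R]) (Y x)%:E)%E ->
  (\int[P]_x ((Z x) `^ p)%:E = z%:E)%E ->
  (\int[P]_x ((Y x) `^ p)%:E <= (2 `^ p * (2 `^ p * z + 1))%:E)%E.
Proof.
move=> p1 mY mZ Y0 Z0 mart hz.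
have mh M : measurable_fun setT (fun x => nM Y M x `^ (p - 1)).
  exact: (measurableT_comp (measurable_realfun.measurable_powR _) (mnM M mY)).
have mYp : measurable_fun setT (fun x => Y x `^ p).
  exact: (measurableT_comp (measurable_realfun.measurable_powR _) mY).
have mZp : measurable_fun setT (fun x => Z x `^ p).
  exact: (measurableT_comp (measurable_realfun.measurable_powR _) mZ).
have eqI M : (\int[P]_x (Y x * nM Y M x `^ (p - 1))%:E =
              \int[P]_x (Z x * nM Y M x `^ (p - 1))%:E)%E.
  have c0 : (0:R) `^ (p - 1) = 0 by rewrite powR0//; apply/eqP; lra.
  elim: M => [|M IH].
    under eq_integral do rewrite nM0 c0 mulr0.
    by under [RHS]eq_integral do rewrite nM0 c0 mulr0.
  set a := (M.+1%:R `^ (p - 1) - M%:R `^ (p - 1)).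
  have a0 : 0 <= a by rewrite subr_ge0 powR_le ?ler_nat//; lra.
  have mI : measurable_fun setT (\1_[set x | (M.+1%:R <= Y x)%R] : T -> R).
    exact: measurable_realfun.measurable_indic (mA M.+1%:R mY).
  have key (W : T -> R) : measurable_fun setT W -> (forall x, 0 <= W x) ->
     (\int[P]_x (W x * nM Y M.+1 x `^ (p - 1))%:E =
      \int[P]_x (W x * nM Y M x `^ (p - 1))%:E +
      a%:E * \int[P]_(x in [set x | (M.+1%:R <= Y x)%R]) (W x)%:E)%E.
    move=> mW W0.
    under eq_integral do rewrite hS mulrDr EFinD.
    rewrite ge0_integralD//; first last.
    - apply/measurable_EFinP; apply: measurable_funM => //.
      apply: measurable_funM => //; exact: measurable_cst.
    - by move=> x _; rewrite lee_fin mulr_ge0// mulr_ge0// indicE.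
    - apply/measurable_EFinP; apply: measurable_funM => //.
    - by move=> x _; rewrite lee_fin mulr_ge0// powR_ge0.
    congr (_ + _)%E; rewrite -intA -ge0_integralZl//; first last.
    - by move=> x _; rewrite lee_fin mulr_ge0// indicE.
    - apply/measurable_EFinP; apply: measurable_funM => //.
    by apply: eq_integral => x _; rewrite -EFinM; congr EFin; rewrite /a mulrCA.
  by rewrite key// key// IH mart.
have Jb M : (\int[P]_x (nM Y M x `^ p)%:E <= (2 `^ p * z)%:E)%E.
  have mn := mnM M mY.
  have mnp : measurable_fun setT (fun x => nM Y M x `^ p).
    exact: (measurableT_comp (measurable_powR _) mn).
  set J := (\int[P]_x (nM Y M x `^ p)%:E)%E.
  have J0 : (0 <= J)%E by apply: integral_ge0 => x _; rewrite lee_fin powR_ge0.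
  have JM : (J <= (M%:R `^ p)%:E)%E.
    apply: (@le_trans _ _ (\int[P]_x (cst (M%:R `^ p)%:E) x)%E).
      apply: ge0_le_integral => //.
      - by move=> x _; rewrite lee_fin powR_ge0.
      - exact/measurable_EFinP.
      - move=> x _; rewrite lee_fin; apply: powR_le; first lra.
          exact: nM_ge0.
        rewrite /nM; apply: (@le_trans _ _ (\sum_(k < M) (1:R))).
          by apply: ler_sum => k _; rewrite indicE; case: (_ \in _).
        by rewrite sumr_const card_ord.
    rewrite integral_cst//; rewrite -[leRHS]mule1; apply: lee_pmul => //.
    - exact: probability_le1.
  have Jfin : J \is a fin_num.
    by rewrite ge0_fin_numE//; apply: le_lt_trans JM _; exact: ltry.
  have chain : (J <= (2^-1 * fine J + 2 `^ (p - 1) * z)%:E)%E.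
    apply: (@le_trans _ _ (\int[P]_x (Y x * nM Y M x `^ (p - 1))%:E)%E).
      apply: ge0_le_integral => //.
      - by move=> x _; rewrite lee_fin powR_ge0.
      - exact/measurable_EFinP.
      - by apply/measurable_EFinP; apply: measurable_funM.
      - move=> x _; rewrite lee_fin; apply: ny_bound => //.
          exact: nM_ge0.
        exact: nM_le.
    rewrite eqI.
    apply: (@le_trans _ _ (\int[P]_x ((2^-1 * nM Y M x `^ p)%:E + (2 `^ (p - 1) * Z x `^ p)%:E))%E).
      apply: ge0_le_integral => //.
      - by move=> x _; rewrite lee_fin mulr_ge0// powR_ge0.
      - by apply/measurable_EFinP; apply: measurable_funM.
      - apply: emeasurable_funD; apply/measurable_EFinP; apply: measurable_funM => //;
          exact: measurable_cst.
      - move=> x _; rewrite -EFinD lee_fin (mulrC 2^-1); apply: young2 => //.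
        exact: nM_ge0.
    rewrite ge0_integralD//; first last.
    - apply/measurable_EFinP; apply: measurable_funM => //; exact: measurable_cst.
    - by move=> x _; rewrite lee_fin mulr_ge0// powR_ge0.
    - apply/measurable_EFinP; apply: measurable_funM => //; exact: measurable_cst.
    - by move=> x _; rewrite lee_fin mulr_ge0// powR_ge0.
    under eq_integral do rewrite EFinM.
    under [X in (_ + X)%E]eq_integral do rewrite EFinM.
    rewrite ge0_integralZl//; last by move=> x _; rewrite lee_fin powR_ge0.
    rewrite ge0_integralZl//; last by move=> x _; rewrite lee_fin powR_ge0.
    all: try exact/measurable_EFinP.
    all: try by rewrite lee_fin powR_ge0.
    all: try by rewrite lee_fin invr_ge0.
    by rewrite hz -/J -{1}(fineK Jfin) EFinD !EFinM.
  move: chain; rewrite -(fineK Jfin) !lee_fin (powR_split (ler0n R 2) p1).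
  lra.
have z0 : 0 <= z.
  by rewrite -lee_fin -hz; apply: integral_ge0 => x _; rewrite lee_fin powR_ge0.
pose G := fun (M : nat) x => ((Num.min (Y x) M%:R) `^ p)%:E.
have mG M : measurable_fun setT (G M).
  have h : measurable_fun setT (fun x => (Num.min (Y x) M%:R) `^ p).
    apply: (measurableT_comp (measurable_powR p)).
    exact: (measurable_minr mY (measurable_cst (M%:R : R))).
  exact/measurable_EFinP.
have G0 M x : (0 <= G M x)%E by rewrite lee_fin powR_ge0.
have Gmono x : {homo G ^~ x : n m / (n <= m)%N >-> (n <= m)%E}.
  move=> n m nm; rewrite lee_fin; apply: powR_le; first lra.
    by rewrite /Num.min; case: ifPn => _.
  have : (n%:R <= m%:R :> R) by rewrite ler_nat.
  rewrite /Num.min; case: ifPn => h1; case: ifPn => h2; rewrite -?leNgt in h1 h2 *; lra.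
have GB M : (\int[P]_x G M x <= (2 `^ p * (2 `^ p * z + 1))%:E)%E.
  have mnp : measurable_fun setT (fun x => nM Y M x `^ p).
    exact: (measurableT_comp (measurable_powR _) (mnM M mY)).
  have mnpE : measurable_fun setT (fun x => (nM Y M x `^ p)%:E).
    exact/measurable_EFinP.
  apply: (@le_trans _ _ (\int[P]_x ((2 `^ p)%:E * ((nM Y M x `^ p)%:E + 1%E)))%E).
    apply: ge0_le_integral => //.
      apply: emeasurable_funM; first exact: measurable_cst.
      by apply: emeasurable_funD => //; exact: measurable_cst.
    move=> x _; rewrite /G -EFinD -EFinM lee_fin; apply: m_bound => //.
    - by rewrite /Num.min; case: ifPn.
    - exact: nM_ge0.
    - exact: nM_min.
  rewrite ge0_integralZl//; first last.
  all: try by rewrite lee_fin powR_ge0.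
  all: try by move=> x _; rewrite adde_ge0// lee_fin powR_ge0.
  all: try by apply: emeasurable_funD => //; exact: measurable_cst.
  rewrite ge0_integralD//; first last.
  all: try exact: measurable_cst.
  all: try by move=> x _; rewrite lee_fin powR_ge0.
  rewrite integral_cst// mul1e EFinM; apply: lee_wpmul2l; first by rewrite lee_fin powR_ge0.
  rewrite EFinD; apply: leeD; first exact: Jb.
  exact: probability_le1.
have -> : (\int[P]_x (Y x `^ p)%:E = \int[P]_x limn (G ^~ x))%E.
  apply: eq_integral => x _; apply/esym/lim_near_cst => //.
  near=> M; rewrite /G /Num.min ifT//.
  apply: (lt_le_trans (truncnS_gt (Y x))); rewrite ler_nat.
  near: M; exists (Num.trunc (Y x)).+1 => //.
rewrite monotone_convergence//.
apply: lime_le.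
  apply: ereal_nondecreasing_is_cvgn => n m nm.
  apply: ge0_le_integral => //; first by move=> x _; exact: Gmono.
by apply: nearW => M; exact: GB.
Unshelve. all: by end_near. Qed.

Unset Implicit Arguments. Set Strict Implicit.

Theorem lemma4p1 (R : realType) (d : measure_display) (T : measurableType d)
  (P : probability T R) (F : R -> set (set T)) (X : R -> T -> R) (r p t : R) :
  filtration F ->
  martingale P F (fun s x => expR (- r * s) * expR (X s x)) ->
  1 < p -> 0 < t ->
  (\int[P]_x ((expR (- r * t) * expR (X t x)) `^ p)%:E < +oo)%E ->
  (limf_esup (fun eps : R => \int[P]_x (expR (p * X (eps ^+ 2) x))%:E)
             (0%R)^'+ < +oo)%E.
Proof.
move=> [Fsa Fmono] [mM intM martM] p1 t0 hZ.
pose S := fun s x => expR (- r * s) * expR (X s x).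
have mS s : 0 <= s -> measurable_fun setT (S s).
  move=> s0 _ B mB; rewrite setTI; apply: (Fsa s s0).2; exact: mM.
have S0 s x : 0 <= S s x by rewrite mulr_ge0// expR_ge0.
have Zfin : (\int[P]_x ((S t x) `^ p)%:E \is a fin_num)%E.
  by rewrite ge0_fin_numE//; apply: integral_ge0 => x _; rewrite lee_fin powR_ge0.
set z := fine (\int[P]_x ((S t x) `^ p)%:E)%E.
pose K := (2 `^ p * (2 `^ p * z + 1)).
have bnd s : 0 <= s -> s <= t -> (\int[P]_x ((S s x) `^ p)%:E <= K%:E)%E.
  move=> s0 st; apply: (@core _ _ _ P (S s) (S t)) => //.
  - exact: mS.
  - exact: mS (ltW t0).
  - move=> c.
    have -> : [set x | (c <= S s x)%R] = S s @^-1` `[c, +oo[.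
      by apply/seteqP; split => y /=; rewrite in_itv /= andbT.
    apply: martM => //; exact: mM.
  - by rewrite /z (fineK Zfin).
pose e := Num.min 1 t.
have e0 : 0 < e by rewrite /e /Num.min; case: ifPn.
have e1 : e <= 1 by rewrite /e /Num.min; case: ifPn => h; rewrite -?leNgt in h *; lra.
have et : e <= t by rewrite /e /Num.min; case: ifPn => h; rewrite -?leNgt in h *; lra.
pose C := (expR (`|p * r| * t) * K)%:E.
apply: (@le_lt_trans _ _ C); last exact: ltry.
rewrite limf_esupE.
have HV : (0:R)^'+ [set eps : R | 0 < eps /\ eps < e].
  near=> eps; split; near: eps; [exact: nbhs_right_gt | exact: nbhs_right_lt].
apply: le_trans; first by apply: ereal_inf_lbound; exists [set eps : R | 0 < eps /\ eps < e].
apply: ge_ereal_sup => _ [eps [eps0 epse] <-].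
set s := eps ^+ 2.
have s0 : 0 <= s by rewrite /s sqr_ge0.
have st : s <= t.
  rewrite /s expr2; apply: (@le_trans _ _ eps); last lra.
  by rewrite ler_piMl//; lra.
have -> : (\int[P]_x (expR (p * X s x))%:E =
           (expR (p * r * s))%:E * \int[P]_x ((S s x) `^ p)%:E)%E.
  rewrite -ge0_integralZl//; first last.
  all: try by rewrite lee_fin expR_ge0.
  all: try by move=> x _; rewrite lee_fin powR_ge0.
  all: try (apply/measurable_EFinP;
    exact: (measurableT_comp (measurable_powR _) (mS s s0))).
  apply: eq_integral => x _; rewrite -EFinM; congr EFin.
  rewrite /S /powR gt_eqF ?mulr_gt0 ?expR_gt0// -expRD expRK -expRD.
  congr expR; ring.
rewrite /C EFinM; apply: lee_pmul => //.
- by apply: integral_ge0 => x _; rewrite lee_fin powR_ge0.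
- rewrite lee_fin ler_expR.
  apply: (@le_trans _ _ (`|p * r| * s)); last by rewrite ler_wpM2l.
  apply: (le_trans (ler_norm _)); by rewrite normrM (ger0_norm s0).
- exact: bnd.
Unshelve. all: by end_near.
Qed.
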